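(* Let $\chi,b,\nu,\mu>0$, $c\in\mathbb{R}$, $r$ as in the context, and assume $b>2\chi\mu$ and $c>\frac{\chi\mu r^*}{2\sqrt{\nu}(b-\chi\mu)}-2\sqrt{\frac{r^*(b-2\chi\mu)}{b-\chi\mu}}$. For any $u\in\mathcal{E}_1$, $U_1^*(\cdot;u)$ is the unique positive solution in $\mathcal{E}_1$ of $$0=U_{xx}+(c-\chi\Psi_x(x;u))U_x+(r(x)-\chi\nu\Psi(x;u)-(b-\chi\mu)U)U,\quad x\in\mathbb{R}.$$
   Context: $r$ is globally Hölder continuous and bounded, with finite limits $r(\pm\infty)$, $r(-\infty)<0<r(\infty)$, $r(-\infty)\le r(x)\le r(\infty)$; $r^*=\sup r=r(\infty)$. $C^b_{\rm unif}(\mathbb{R})$: bounded uniformly continuous functions; $\Psi(x;u)=\frac{\mu}{2\sqrt\nu}\int_{\mathbb{R}}e^{-\sqrt\nu|x-y|}u(y)dy$; $\mathcal{A}_u(U)=U_{xx}+(c-\chi\Psi_x(x;u))U_x+(r(x)-\chi\nu\Psi(x;u)-(b-\chi\mu)U)U$. Fix $r_1\in(r(-\infty),0)$, $x_1$ with $r(x)\le r_1$ for $x\le x_1$, $\theta_1$ the positive root of $\theta^2+c\theta+r_1=0$, and $U_1^+(x)=\min\{\frac{r^*}{b-\chi\mu},\frac{r^*}{b-\chi\mu}e^{\theta_1(x-x_1)}\}$. For $\varepsilon>0$ let $f_\varepsilon(u)=u(r^*-\varepsilon-\frac{\chi\mu r^*}{b-\chi\mu}-(b-\chi\mu)u)$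 for $u\ge0$, $f_\varepsilon=0$ on $[-\varepsilon,0)$; let $(\phi_\varepsilon,\tilde c_\varepsilon)$ be a decreasing traveling wave: $\phi_\varepsilon''+\tilde c_\varepsilon\phi_\varepsilon'+f_\varepsilon(\phi_\varepsilon)=0$, $\phi_\varepsilon(-\infty)=\frac{(r^*-\varepsilon)(b-\chi\mu)-\chi\mu r^*}{(b-\chi\mu)^2}$, $\phi_\varepsilon(\infty)=-\varepsilon$ (such waves exist with $\tilde c_\varepsilon\to2\sqrt{r^*(b-2\chi\mu)/(b-\chi\mu)}$ as $\varepsilon\to0^+$). With $\delta:=c-\frac{\chi\mu r^*}{2\sqrt\nu(b-\chi\mu)}+2\sqrt{\frac{r^*(b-2\chi\mu)}{b-\chi\mu}}>0$, fix $\varepsilon\in\big(0,\frac{r^*(b-2\chi\mu)}{b-\chi\mu}\big)$ with $\tilde c_\varepsilon>2\sqrt{\frac{r^*(b-2\chi\mu)}{b-\chi\mu}}-\frac\delta2$. Let $\psi_\varepsilon(x)=\phi_\varepsilon(-x)$, translated so that $\psi_\varepsilon(x_0)=0$ for some $x_0>x_1$ with $r(x)\ge r^*-\varepsilon$ for $x>x_0$. $U_1^-=\max\{\psi_\varepsilon,0\}$, $\mathcal{E}_1=\{u\in C^b_{\rm unif}(\mathbb{R}):U_1^-\le u\le U_1^+\}$. For $u\in\mathcal{E}_1$, $U_1^*(x;u)=\lim_{t\to\infty}U(t,x;u)$ where $U(t,x;u)$ solves $U_t=\mathcal{A}_u(U)$, $U(0,\cdot;u)=U_1^+$ (this limit exists,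 lies in $\mathcal{E}_1$ and solves the displayed elliptic equation). *)

(* Defs.v *)
From Stdlib Require Import Reals.
From Coquelicot Require Import Coquelicot.
Open Scope R_scope.

Definition Cb_unif (u : R -> R) : Prop :=
  (exists M, forall x, Rabs (u x) <= M) /\
  (forall e, 0 < e -> exists d, 0 < d /\
     forall x y, Rabs (x - y) < d -> Rabs (u x - u y) < e).

Definition Holder_cont (r : R -> R) : Prop :=
  exists alpha K, 0 < alpha <= 1 /\ 0 <= K /\
    forall x y, Rabs (r x - r y) <= K * Rpower (Rabs (x - y)) alpha.

Definition Psi (nu mu : R) (u : R -> R) (x : R) : R :=
  mu / (2 * sqrt nu) *
  RInt_gen (fun y => exp (- sqrt nu * Rabs (x - y)) * u y)
           (Rbar_locally m_infty) (Rbar_locally p_infty).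

Definition Psi_x (nu mu : R) (u : R -> R) (x : R) : R :=
  Derive (Psi nu mu u) x.

Definition Aop (c chi nu mu b : R) (r : R -> R) (u U : R -> R) (x : R) : R :=
  Derive (Derive U) x + (c - chi * Psi_x nu mu u x) * Derive U x
  + (r x - chi * nu * Psi nu mu u x - (b - chi * mu) * U x) * U x.

Definition elliptic_sol (c chi nu mu b : R) (r : R -> R) (u U : R -> R) : Prop :=
  (forall x, ex_derive U x) /\ (forall x, ex_derive (Derive U) x) /\
  (forall x, Aop c chi nu mu b r u U x = 0).

Definition parabolic_sol (c chi nu mu b : R) (r : R -> R) (u U0 : R -> R)
    (U : R -> R -> R) : Prop :=
  (forall x, U 0 x = U0 x) /\
  (exists M, forall t x, 0 <= t -> Rabs (U t x) <= M) /\
  (forall e, 0 < e -> exists d, 0 < d /\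
     forall t x, 0 < t < d -> Rabs (U t x - U0 x) < e) /\
  (forall t x, 0 < t ->
     ex_derive (fun s => U s x) t /\ ex_derive (U t) x /\
     ex_derive (Derive (U t)) x /\
     Derive (fun s => U s x) t = Aop c chi nu mu b r u (U t) x).

Definition f_eps (rstar eps chi mu b : R) (v : R) : R :=
  if Rle_dec 0 v then
    v * (rstar - eps - chi * mu * rstar / (b - chi * mu) - (b - chi * mu) * v)
  else 0.

Definition U1plus (rstar chi mu b theta1 x1 : R) (x : R) : R :=
  Rmin (rstar / (b - chi * mu)) (rstar / (b - chi * mu) * exp (theta1 * (x - x1))).

Definition in_E1 (U1m U1p : R -> R) (u : R -> R) : Prop :=
  Cb_unif u /\ forall x, U1m x <= u x <= U1p x.

(* Main.v *)
Require Import Defs.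
From Stdlib Require Import Reals Lra Classical.
From Coquelicot Require Import Coquelicot.
Open Scope R_scope.


Lemma cont_of_der (f df : R -> R) x : is_derive f x (df x) -> continuity_pt f x.
Proof. intro H. apply continuity_pt_filterlim. apply (@ex_derive_continuous R_AbsRing R_NormedModule). exists (df x). exact H. Qed.

Lemma mvt_any (f df : R -> R) a b : (forall t, is_derive f t (df t)) ->
  exists c, Rmin a b <= c <= Rmax a b /\ f b - f a = df c * (b - a).
Proof.
  intro H. apply MVT_gen. intros; apply H. intros; eapply cont_of_der; apply H.
Qed.

Lemma mvt_open (f df : R -> R) a b : (forall t, is_derive f t (df t)) -> a < b ->
  exists c, a < c < b /\ f b - f a = df c * (b - a).
Proof.
  intros H Hab. destruct (MVT_cor2 f df a b Hab) as [c [E Hc]].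
  intros; apply is_derive_Reals; apply H.
  exists c; split; auto.
Qed.

Lemma mono_le (f df : R -> R) a b : (forall t, is_derive f t (df t)) -> a <= b ->
  (forall t, a < t < b -> 0 <= df t) -> f a <= f b.
Proof.
  intros H Hab Hd. destruct (Req_dec a b) as [->|Hne]. lra.
  destruct (mvt_open f df a b H) as [c [Hc E]]. lra.
  specialize (Hd c Hc). nra.
Qed.

Lemma mono_lt (f df : R -> R) a b : (forall t, is_derive f t (df t)) -> a < b ->
  (forall t, a < t < b -> 0 < df t) -> f a < f b.
Proof.
  intros H Hab Hd.
  destruct (mvt_open f df a b H) as [c [Hc E]]. lra.
  specialize (Hd c Hc). nra.
Qed.

Lemma der_min (f : R -> R) x l : is_derive f x l -> (forall y, f x <= f y) -> l = 0.
Proof.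
  intros H Hm.
  assert (pr : derivable_pt f x). { exists l. apply is_derive_Reals. exact H. }
  assert (E : derive_pt f x pr = l).
  { apply derive_pt_eq_0. apply is_derive_Reals. exact H. }
  rewrite <- E. apply (deriv_minimum f (x-1) (x+1) x pr); try lra.
  intros; apply Hm.
Qed.

Lemma first_hit (f : R -> R) y x L : y <= x -> (forall t, continuity_pt f t) ->
  f y > L -> f x <= L ->
  exists t, y < t <= x /\ f t <= L /\ forall v, y <= v < t -> f v > L.
Proof.
  intros Hyx Hc Hy Hx.
  set (E := fun v => y <= v <= x /\ forall w, y <= w <= v -> f w > L).
  assert (Hb : bound E). { exists x. intros v [Hv _]. lra. }
  assert (Hne : exists v, E v). { exists y. split. lra. intros w Hw. replace w with y by lra. exact Hy. }
  destruct (completeness E Hb Hne) as [t [Hub Hlub]].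
  assert (Hyt : y <= t). { apply Hub. destruct Hne as [v Hv]. unfold E; split. lra. intros w Hw; replace w with y by lra; exact Hy. }
  assert (Htx : t <= x). { apply Hlub. intros v [Hv _]. lra. }
  assert (Hbelow : forall v, y <= v < t -> f v > L).
  { intros v Hv. destruct (Rle_or_lt t v) as [H1|H1]. lra.
    destruct (Classical_Prop.classic (exists e, E e /\ v < e)) as [[e [[He1 He2] He3]]|Hno].
    - apply He2. lra.
    - exfalso. assert (t <= v). { apply Hlub. intros e He. destruct (Rle_or_lt e v). auto. exfalso; apply Hno; exists e; auto. } lra. }
  assert (Hft : f t <= L).
  { destruct (Rle_or_lt (f t) L) as [H|H]. exact H. exfalso.
    assert (Hct := Hc t). apply continuity_pt_filterlim in Hct.
    destruct (proj1 (filterlim_locally _ _) Hct (mkposreal _ (proj2 (Rlt_0_minus _ _) H))) as [d Hd].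
    simpl in Hd.
    assert (Htx' : t < x). { destruct (Req_dec t x) as [->|]. lra. lra. }
    set (t' := Rmin x (t + d/2)).
    assert (Et' : E t').
    { split. unfold t'. assert (0 < d) by apply cond_pos. split. apply Rmin_glb; lra. apply Rmin_l.
      intros w Hw. destruct (Rlt_or_le w t) as [Hw'|Hw']. apply Hbelow; lra.
      assert (B : ball t d w).
      { unfold ball; simpl; unfold AbsRing_ball, abs, minus, plus, opp; simpl.
        assert (0 < d) by apply cond_pos. assert (t' <= t + d/2) by apply Rmin_r.
        apply Rabs_def1; lra. }
      specialize (Hd w B). unfold ball in Hd; simpl in Hd; unfold AbsRing_ball, abs, minus, plus, opp in Hd; simpl in Hd.
      apply Rabs_def2 in Hd. lra. }
    assert (t' <= t) by (apply Hub; exact Et').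
    unfold t' in H0. assert (0 < d) by apply cond_pos. revert H0; apply Rmin_case; lra. }
  exists t. split; [|split; auto].
  split; auto. destruct (Req_dec y t) as [<-|]; lra.
Qed.
Lemma der_plus (f g:R->R) x df dg: is_derive f x df -> is_derive g x dg -> is_derive (fun t => f t + g t) x (df + dg).
Proof. intros. apply (@is_derive_plus R_AbsRing R_NormedModule); auto. Qed.
Lemma der_minus (f g:R->R) x df dg: is_derive f x df -> is_derive g x dg -> is_derive (fun t => f t - g t) x (df - dg).
Proof. intros. apply (@is_derive_minus R_AbsRing R_NormedModule); auto. Qed.
Lemma der_mult (f g:R->R) x df dg: is_derive f x df -> is_derive g x dg -> is_derive (fun t => f t * g t) x (df * g x + f x * dg).
Proof. intros. apply Derive.is_derive_mult; auto. Qed.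
Lemma der_expk k x : is_derive (fun t => exp (k * t)) x (k * exp (k * x)).
Proof. auto_derive; auto. ring. Qed.
Lemma der_const (c x : R) : is_derive (fun _ => c) x 0.
Proof. apply (@is_derive_const R_AbsRing R_NormedModule). Qed.
Lemma der_id x : is_derive (fun t => t) x 1.
Proof. apply (@is_derive_id R_AbsRing). Qed.

Lemma exp_le x y : x <= y -> exp x <= exp y.
Proof. intro H. destruct (Rle_lt_or_eq_dec _ _ H) as [H1|H1]. left; apply exp_increasing; auto. rewrite H1; lra. Qed.

Lemma der_expf (Pf p : R -> R) x : is_derive Pf x (p x) -> is_derive (fun t => exp (Pf t)) x (p x * exp (Pf x)).
Proof.
  intro H. assert (He : is_derive exp (Pf x) (exp (Pf x))) by (auto_derive; auto; ring).
  exact (is_derive_comp exp Pf x _ _ He H).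
Qed.

Lemma prop_right (z dz G dG a : R -> R) :
  (forall t, is_derive z t (dz t)) -> (forall t, is_derive G t (dG t)) ->
  (forall t, 0 < a t) -> (forall t, dz t = G t * a t) ->
  (forall t, z t > 1 -> dG t > 0) ->
  forall y, z y > 1 -> G y >= 0 -> forall x, y <= x -> z y <= z x.
Proof.
  intros Hz HG Ha Hdz HdG y Hy HGy x Hyx.
  destruct (Rle_or_lt (z y) (z x)) as [H|H]; auto. exfalso.
  set (L := Rmax 1 ((z x + z y)/2)).
  assert (HL1 : 1 <= L) by apply Rmax_l.
  assert (HL2 : z y > L). { unfold L. apply Rmax_case; lra. }
  assert (HL3 : z x <= L). { unfold L. eapply Rle_trans; [|apply Rmax_r]. lra. }
  destruct (first_hit z y x L Hyx (fun t => cont_of_der z dz t (Hz t)) HL2 HL3) as [t [Ht [Hzt Hb]]].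
  assert (HGm : forall v, y <= v <= t -> G y <= G v).
  { intros v Hv. apply (mono_le G dG); auto. lra. intros s Hs. left. apply HdG.
    assert (z s > L) by (apply Hb; lra). lra. }
  assert (z y <= z t).
  { apply (mono_le z dz); auto. lra. intros s Hs. rewrite Hdz.
    apply Rmult_le_pos. assert (G y <= G s) by (apply HGm; lra). lra. left; apply Ha. }
  lra.
Qed.

Lemma der_refl (f df : R -> R) t : is_derive f (-t) (df (-t)) ->
  is_derive (fun s => f (-s)) t (- df (-t)).
Proof.
  intro H. replace (- df (-t)) with (scal (-1) (df (-t))).
  apply (is_derive_comp f (fun s => -s)). exact H.
  assert (Hd : is_derive (fun s : R => - s) t (-1)) by (auto_derive; auto; ring). exact Hd.
  unfold scal; simpl; unfold mult; simpl. ring.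
Qed.

Lemma prop_left (z dz G dG a : R -> R) :
  (forall t, is_derive z t (dz t)) -> (forall t, is_derive G t (dG t)) ->
  (forall t, 0 < a t) -> (forall t, dz t = G t * a t) ->
  (forall t, z t > 1 -> dG t > 0) ->
  forall y, z y > 1 -> G y <= 0 -> forall x, x <= y -> z y <= z x.
Proof.
  intros Hz HG Ha Hdz HdG y Hy HGy x Hxy.
  assert (K := prop_right (fun t => z (-t)) (fun t => - dz (-t)) (fun t => - G (-t))
     (fun t => dG (-t)) (fun t => a (-t))).
  simpl in K.
  replace y with (- - y) by ring. replace x with (- - x) by ring.
  apply K; try (intros; auto).
  - apply der_refl. apply Hz.
  - replace (dG (-t)) with (- - dG (-t)) by ring. apply (is_derive_opp (fun s => G (-s))). apply der_refl. apply HG.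
  - rewrite Hdz. ring.
  - replace (- - y) with y by ring. auto.
  - replace (- - y) with y by ring. lra.
  - lra.
Qed.

Definition RI (f : R -> R) a b : R := RInt f a b.
Lemma RInt_correctR (f : R -> R) a b : ex_RInt f a b -> is_RInt f a b (RI f a b).
Proof. exact (@RInt_correct R_CompleteNormedModule f a b). Qed.
Lemma RInt_ChaslesR (f : R -> R) a b c : ex_RInt f a b -> ex_RInt f b c -> RI f a b + RI f b c = RI f a c.
Proof. exact (@RInt_Chasles R_CompleteNormedModule f a b c). Qed.

Lemma RInt_diff (g : R -> R) a b : (forall y, continuous g y) ->
  is_RInt g a b (RI g 0 b - RI g 0 a).
Proof.
  intro Hc.
  assert (Hex : forall a b, ex_RInt g a b) by (intros; apply (@ex_RInt_continuous R_CompleteNormedModule); intros; apply Hc).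
  replace (RI g 0 b - RI g 0 a) with (RI g a b). apply RInt_correctR. apply Hex.
  rewrite <- (RInt_ChaslesR g 0 a b) by apply Hex. ring.
Qed.

Lemma RInt_der (g : R -> R) x : (forall y, continuous g y) ->
  is_derive (fun b => RI g 0 b) x (g x).
Proof.
  intro Hc. apply (is_derive_RInt g (fun b => RI g 0 b) 0). apply filter_forall. intro b.
  apply RInt_correctR. apply (@ex_RInt_continuous R_CompleteNormedModule); intros; apply Hc. apply Hc.
Qed.

Lemma left_int (g : R -> R) s C : 0 < s -> (forall y, continuous g y) ->
  (forall y, 0 <= g y <= C * exp (s * y)) ->
  exists A : R -> R, (forall x, is_RInt_gen g (Rbar_locally m_infty) (at_point x) (A x)) /\
   (forall x, is_derive A x (g x)) /\ (forall x, 0 <= A x <= C * exp (s * x) / s).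
Proof.
  intros Hs Hc Hg.
  set (F := fun b => RI g 0 b).
  assert (HF : forall t, is_derive F t (g t)) by (intro; apply RInt_der; auto).
  assert (HF0 : F 0 = 0) by (unfold F, RI; exact (@RInt_point R_CompleteNormedModule 0 g)).
  assert (HC : 0 <= C). { destruct (Hg 0) as [H1 H2]. rewrite Rmult_0_r, exp_0 in H2. lra. }
  assert (Hmono : forall a b, a <= b -> F a <= F b).
  { intros a b Hab. apply (mono_le F g); auto. intros; apply Hg. }
  set (D := fun t => C * exp (s * t) / s - F t).
  assert (HD : forall t, is_derive D t (C * exp (s * t) - g t)).
  { intro t. unfold D. apply der_minus; [|apply HF].
    replace (C * exp (s * t)) with (C / s * (s * exp (s * t))) by (field; lra).
    eapply is_derive_ext; [|apply (is_derive_scal (fun t => exp (s * t)) _ (C / s)); apply der_expk].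
    intro; simpl; field; lra. }
  assert (HDm : forall a b, a <= b -> D a <= D b).
  { intros a b Hab. apply (mono_le D _ a b HD Hab). intros t _. specialize (Hg t). lra. }
  set (E := fun v => exists a, v = - F a).
  assert (Hb : bound E).
  { exists (C / s). intros v [a ->]. destruct (Rle_or_lt a 0) as [Ha|Ha].
    - specialize (HDm a 0 Ha). unfold D in HDm. rewrite HF0, Rmult_0_r, exp_0 in HDm.
      assert (0 <= C * exp (s * a) / s). { apply Rmult_le_pos. apply Rmult_le_pos; auto. left; apply exp_pos. left; apply Rinv_0_lt_compat; auto. }
      lra.
    - specialize (Hmono 0 a (Rlt_le _ _ Ha)). rewrite HF0 in Hmono.
      assert (0 <= C / s) by (apply Rmult_le_pos; auto; left; apply Rinv_0_lt_compat; auto). lra. }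
  assert (Hne : exists v, E v) by (exists (- F 0); exists 0; auto).
  destruct (completeness E Hb Hne) as [m [Hub Hlub]].
  exists (fun x => F x + m). split; [|split].
  - intro x. intros P [eps HP].
    assert (Ha0 : exists a0, m - eps < - F a0).
    { destruct (Classical_Prop.classic (exists a0, m - eps < - F a0)) as [H|H]; auto.
      exfalso. assert (m <= m - eps). { apply Hlub. intros v [a ->]. destruct (Rle_or_lt (- F a) (m - eps)); auto. exfalso; apply H; exists a; auto. }
      assert (0 < eps) by apply cond_pos. lra. }
    destruct Ha0 as [a0 Ha0].
    apply (Filter_prod _ _ _ (fun a => a < a0) (fun b => b = x)).
    exists a0; auto. reflexivity.
    intros a b Ha Hbx. subst b. simpl. exists (F x - F a). split. apply RInt_diff; auto.
    apply HP. unfold ball; simpl; unfold AbsRing_ball, abs, minus, plus, opp; simpl.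
    assert (- F a <= m) by (apply Hub; exists a; auto).
    assert (F a <= F a0) by (apply Hmono; lra).
    apply Rabs_def1; lra.
  - intro x. eapply is_derive_ext. intro t. reflexivity.
    replace (g x) with (g x + 0) by ring. apply der_plus. apply HF. apply der_const.
  - intro x. split.
    + assert (- F x <= m) by (apply Hub; exists x; auto). lra.
    + assert (m <= C * exp (s * x) / s - F x). 
      { apply Hlub. intros v [a ->]. destruct (Rle_or_lt a x) as [Ha|Ha].
        - specialize (HDm a x Ha). unfold D in HDm.
          assert (0 <= C * exp (s * a) / s). { apply Rmult_le_pos. apply Rmult_le_pos; auto. left; apply exp_pos. left; apply Rinv_0_lt_compat; auto. }
          lra.
        - specialize (Hmono x a (Rlt_le _ _ Ha)).
          assert (0 <= C * exp (s * x) / s). { apply Rmult_le_pos. apply Rmult_le_pos; auto. left; apply exp_pos. left; apply Rinv_0_lt_compat; auto. }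
          lra. }
      lra.
Qed.

Lemma right_int (g : R -> R) s C : 0 < s -> (forall y, continuous g y) ->
  (forall y, 0 <= g y <= C * exp (- s * y)) ->
  exists B : R -> R, (forall x, is_RInt_gen g (at_point x) (Rbar_locally p_infty) (B x)) /\
   (forall x, is_derive B x (- g x)) /\ (forall x, 0 <= B x <= C * exp (- s * x) / s).
Proof.
  intros Hs Hc Hg.
  set (F := fun b => RI g 0 b).
  assert (HF : forall t, is_derive F t (g t)) by (intro; apply RInt_der; auto).
  assert (HF0 : F 0 = 0) by (unfold F, RI; exact (@RInt_point R_CompleteNormedModule 0 g)).
  assert (HC : 0 <= C). { destruct (Hg 0) as [H1 H2]. rewrite Rmult_0_r, exp_0 in H2. lra. }
  assert (Hmono : forall a b, a <= b -> F a <= F b).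
  { intros a b Hab. apply (mono_le F g); auto. intros; apply Hg. }
  set (D := fun t => F t + C * exp (- s * t) / s).
  assert (HD : forall t, is_derive D t (g t - C * exp (- s * t))).
  { intro t. unfold D. replace (g t - C * exp (- s * t)) with (g t + C / s * (- s * exp (- s * t))) by (field; lra).
    apply der_plus; [apply HF|].
    eapply is_derive_ext; [|apply (is_derive_scal (fun t => exp (- s * t)) _ (C / s)); apply der_expk].
    intro; simpl; field; lra. }
  assert (HDm : forall a b, a <= b -> D b <= D a).
  { intros a b Hab. 
    assert (H := mono_le (fun t => - D t) (fun t => - (g t - C * exp (- s * t))) a b).
    simpl in H. assert (- D a <= - D b). apply H; auto. intro t. apply (@is_derive_opp R_AbsRing R_NormedModule). apply HD.
    intros t _. specialize (Hg t). lra. lra. }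
  assert (Hpos : forall x, 0 <= C * exp (- s * x) / s).
  { intro x. apply Rmult_le_pos. apply Rmult_le_pos; auto. left; apply exp_pos. left; apply Rinv_0_lt_compat; auto. }
  set (E := fun v => exists a, v = F a).
  assert (Hb : bound E).
  { exists (C / s). intros v [a ->]. destruct (Rle_or_lt 0 a) as [Ha|Ha].
    - specialize (HDm 0 a Ha). unfold D in HDm. rewrite HF0, Rmult_0_r, exp_0 in HDm.
      specialize (Hpos a). lra.
    - specialize (Hmono a 0 (Rlt_le _ _ Ha)). rewrite HF0 in Hmono.
      assert (0 <= C / s) by (apply Rmult_le_pos; auto; left; apply Rinv_0_lt_compat; auto). lra. }
  assert (Hne : exists v, E v) by (exists (F 0); exists 0; auto).
  destruct (completeness E Hb Hne) as [m [Hub Hlub]].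
  exists (fun x => m - F x). split; [|split].
  - intro x. intros P [eps HP].
    assert (Ha0 : exists a0, m - eps < F a0).
    { destruct (Classical_Prop.classic (exists a0, m - eps < F a0)) as [H|H]; auto.
      exfalso. assert (m <= m - eps). { apply Hlub. intros v [a ->]. destruct (Rle_or_lt (F a) (m - eps)); auto. exfalso; apply H; exists a; auto. }
      assert (0 < eps) by apply cond_pos. lra. }
    destruct Ha0 as [a0 Ha0].
    apply (Filter_prod _ _ _ (fun a => a = x) (fun b => a0 < b)).
    reflexivity. exists a0; auto.
    intros a b Hax Hb0. subst a. simpl. exists (F b - F x). split. apply RInt_diff; auto.
    apply HP. unfold ball; simpl; unfold AbsRing_ball, abs, minus, plus, opp; simpl.
    assert (F b <= m) by (apply Hub; exists b; auto).
    assert (F a0 <= F b) by (apply Hmono; lra).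
    apply Rabs_def1; lra.
  - intro x. eapply is_derive_ext. intro t. reflexivity.
    replace (- g x) with (0 - g x) by ring. apply der_minus. apply der_const. apply HF.
  - intro x. split.
    + assert (F x <= m) by (apply Hub; exists x; auto). lra.
    + assert (m <= C * exp (- s * x) / s + F x). 
      { apply Hlub. intros v [a ->]. destruct (Rle_or_lt x a) as [Ha|Ha].
        - specialize (HDm x a Ha). unfold D in HDm. specialize (Hpos a). lra.
        - specialize (Hmono a x (Rlt_le _ _ Ha)). specialize (Hpos x). lra. }
      lra.
Qed.

Lemma scalR (a b : R) : scal a b = a * b.
Proof. reflexivity. Qed.

Lemma cont_mult (f g : R -> R) x : continuous f x -> continuous g x -> continuous (fun t => f t * g t) x.
Proof. intros. apply (@continuous_mult R_UniformSpace R_AbsRing f g); auto. Qed.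

Lemma cont_expk k x : continuous (fun t => exp (k * t)) x.
Proof. apply (@ex_derive_continuous R_AbsRing R_NormedModule). exists (k * exp (k * x)). apply der_expk. Qed.

Lemma psi_props nu mu u R0 : 0 < nu -> 0 < mu -> (forall y, continuous u y) ->
  (forall y, 0 <= u y <= R0) ->
  (forall x, ex_derive (Psi nu mu u) x) /\
  (forall x, 0 <= Psi nu mu u x <= mu / (2 * sqrt nu) * (2 * R0 / sqrt nu)).
Proof.
  intros Hnu Hmu Hc Hu.
  set (s := sqrt nu). assert (Hs : 0 < s) by (apply sqrt_lt_R0; auto).
  destruct (left_int (fun y => exp (s * y) * u y) s R0 Hs) as [A [HA1 [HA2 HA3]]].
  { intro; apply cont_mult; auto. apply cont_expk. }
  { intro y. specialize (Hu y). assert (0 < exp (s * y)) by apply exp_pos. split; nra. }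
  destruct (right_int (fun y => exp (- s * y) * u y) s R0 Hs) as [B [HB1 [HB2 HB3]]].
  { intro; apply cont_mult; auto. apply cont_expk. }
  { intro y. specialize (Hu y). assert (0 < exp (- s * y)) by apply exp_pos. split; nra. }
  assert (Hform : forall x, Psi nu mu u x = mu / (2 * s) * (exp (- s * x) * A x + exp (s * x) * B x)).
  { intro x. unfold Psi. fold s. f_equal.
    apply (@is_RInt_gen_unique R_CompleteNormedModule).
    1,2: apply Proper_StrongProper, Rbar_locally_filter.
    replace (exp (- s * x) * A x + exp (s * x) * B x) with (plus (scal (exp (- s * x)) (A x)) (scal (exp (s * x)) (B x))) by reflexivity.
    apply (@is_RInt_gen_Chasles R_NormedModule _ _ _ _ _ x).
    - assert (H1 := @is_RInt_gen_scal R_NormedModule _ _ _ _ (fun y => exp (s * y) * u y) (exp (- s * x)) (A x) (HA1 x)).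
      eapply (@is_RInt_gen_ext R_NormedModule); [| | |exact H1]; [exact (@filter_filter _ _ (Rbar_locally_filter _))|exact (@filter_filter _ _ (at_point_filter _))|].
      apply (Filter_prod _ _ _ (fun a => a < x) (fun b => b = x)).
      exists x; auto. reflexivity.
      intros a b Ha Hbx y Hy. subst b. simpl in Hy. rewrite Rmin_left in Hy by lra. rewrite Rmax_right in Hy by lra.
      rewrite scalR.
      rewrite Rabs_right by lra. rewrite <- Rmult_assoc, <- exp_plus. f_equal. f_equal. clearbody s. ring.
    - assert (H1 := @is_RInt_gen_scal R_NormedModule _ _ _ _ (fun y => exp (- s * y) * u y) (exp (s * x)) (B x) (HB1 x)).
      eapply (@is_RInt_gen_ext R_NormedModule); [| | |exact H1]; [exact (@filter_filter _ _ (at_point_filter _))|exact (@filter_filter _ _ (Rbar_locally_filter _))|].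
      apply (Filter_prod _ _ _ (fun a => a = x) (fun b => x < b)).
      reflexivity. exists x; auto.
      intros a b Hax Hb y Hy. subst a. simpl in Hy. rewrite Rmin_left in Hy by lra. rewrite Rmax_right in Hy by lra.
      rewrite scalR.
      rewrite Rabs_left by lra. rewrite <- Rmult_assoc, <- exp_plus. f_equal. f_equal. clearbody s. ring. }
  clearbody s.
  split.
  - intro x.
    assert (H1 := der_mult _ _ x _ _ (der_expk (- s) x) (HA2 x)).
    assert (H2 := der_mult _ _ x _ _ (der_expk s x) (HB2 x)).
    assert (H3 := der_plus _ _ x _ _ H1 H2).
    assert (H4 := is_derive_scal _ x (mu / (2 * s)) _ H3).
    eexists. apply (is_derive_ext _ _ x _ (fun t => eq_sym (Hform t)) H4).
  - intro x. rewrite Hform.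
    assert (0 < mu / (2 * s)) by (apply Rdiv_lt_0_compat; lra).
    specialize (HA3 x). specialize (HB3 x).
    assert (E1 : exp (- s * x) * (R0 * exp (s * x) / s) = R0 / s).
    { replace (exp (- s * x) * (R0 * exp (s * x) / s)) with (R0 * exp (- s * x + s * x) / s) by (rewrite exp_plus; field; lra).
      replace (- s * x + s * x) with 0 by ring. rewrite exp_0. field. lra. }
    assert (E2 : exp (s * x) * (R0 * exp (- s * x) / s) = R0 / s).
    { replace (exp (s * x) * (R0 * exp (- s * x) / s)) with (R0 * exp (s * x + - s * x) / s) by (rewrite exp_plus; field; lra).
      replace (s * x + - s * x) with 0 by ring. rewrite exp_0. field. lra. }
    assert (e1 : 0 < exp (- s * x)) by apply exp_pos. assert (e2 : 0 < exp (s * x)) by apply exp_pos.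
    assert (0 <= exp (- s * x) * A x <= R0 / s). { rewrite <- E1. split. nra. apply Rmult_le_compat_l; lra. }
    assert (0 <= exp (s * x) * B x <= R0 / s). { rewrite <- E2. split. nra. apply Rmult_le_compat_l; lra. }
    replace (2 * R0 / s) with (R0 / s + R0 / s) by (field; lra).
    split. apply Rmult_le_pos; lra. apply Rmult_le_compat_l; lra.
Qed.

Lemma core (c beta R0 th x1 T K Bd : R) (p q0 Pf V1 V2 : R -> R) :
  0 < beta -> 0 < K -> 0 < R0 -> 0 < c + 2 * th -> 0 <= Bd ->
  (forall x, is_derive Pf x (p x)) -> (forall x, c * x - Bd <= Pf x <= c * x) ->
  (forall x, ex_derive V1 x) -> (forall x, ex_derive (Derive V1) x) ->
  (forall x, ex_derive V2 x) -> (forall x, ex_derive (Derive V2) x) ->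
  (forall x, Derive (Derive V1) x + p x * Derive V1 x + (q0 x - beta * V1 x) * V1 x = 0) ->
  (forall x, Derive (Derive V2) x + p x * Derive V2 x + (q0 x - beta * V2 x) * V2 x = 0) ->
  (forall x, 0 < V1 x) -> (forall x, 0 < V2 x) ->
  (forall x, V1 x <= R0) -> (forall x, V2 x <= R0) ->
  (forall x, V1 x <= R0 * exp (th * (x - x1))) ->
  (forall x, T <= x -> K / 2 <= V2 x) ->
  forall x, V1 x <= V2 x.
Proof.
  intros Hbeta HK HR0 Hlam HBd HP HPb HV1d HV1dd HV2d HV2dd Heq1 Heq2 HV1p HV2p HV1R HV2R HV1e HV2K y.
  destruct (Rle_or_lt (V1 y) (V2 y)) as [Hle|Hgt]; auto. exfalso.
  set (d1 := Derive V1). set (d2 := Derive V2). set (dd1 := Derive d1). set (dd2 := Derive d2).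
  assert (H1 : forall x, is_derive V1 x (d1 x)) by (intro; apply Derive_correct; auto).
  assert (H2 : forall x, is_derive V2 x (d2 x)) by (intro; apply Derive_correct; auto).
  assert (H1' : forall x, is_derive d1 x (dd1 x)) by (intro; apply Derive_correct; auto).
  assert (H2' : forall x, is_derive d2 x (dd2 x)) by (intro; apply Derive_correct; auto).
  assert (E1 : forall x, dd1 x = - (p x * d1 x) - (q0 x - beta * V1 x) * V1 x) by (intro x; specialize (Heq1 x); fold d1 dd1 in Heq1; lra).
  assert (E2 : forall x, dd2 x = - (p x * d2 x) - (q0 x - beta * V2 x) * V2 x) by (intro x; specialize (Heq2 x); fold d2 dd2 in Heq2; lra).
  assert (HV2n : forall x, V2 x <> 0) by (intro x; specialize (HV2p x); lra).
  assert (HV1n : forall x, V1 x <> 0) by (intro x; specialize (HV1p x); lra).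
  set (z := fun x => V1 x / V2 x).
  set (dz := fun x => (d1 x * V2 x - V1 x * d2 x) / V2 x ^ 2).
  assert (Hz : forall x, is_derive z x (dz x)) by (intro x; apply is_derive_div; auto).
  set (G := fun x => exp (Pf x) * (d1 x * V2 x - V1 x * d2 x)).
  set (dG := fun x => exp (Pf x) * (beta * V1 x * V2 x * (V1 x - V2 x))).
  assert (HG : forall x, is_derive G x (dG x)).
  { intro x.
    assert (H := der_mult _ _ x _ _ (der_expf Pf p x (HP x)) (der_minus _ _ x _ _ (der_mult _ _ x _ _ (H1' x) (H2 x)) (der_mult _ _ x _ _ (H1 x) (H2' x)))).
    match type of H with is_derive _ _ ?l => replace (dG x) with l end. exact H.
    unfold dG. rewrite E1, E2. ring. }
  set (a := fun x => exp (- Pf x) / V2 x ^ 2).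
  assert (Ha : forall x, 0 < a x).
  { intro x. unfold a. apply Rdiv_lt_0_compat. apply exp_pos. apply pow_lt; auto. }
  assert (Hdz : forall x, dz x = G x * a x).
  { intro x. unfold dz, G, a. rewrite exp_Ropp. field. split; auto. apply Rgt_not_eq, exp_pos. }
  assert (Hzgt : forall x, z x > 1 -> V1 x > V2 x).
  { intros x Hx. assert (V1 x = z x * V2 x) by (unfold z; field; auto). specialize (HV2p x). nra. }
  assert (HdG : forall x, z x > 1 -> dG x > 0).
  { intros x Hx. apply Hzgt in Hx. unfold dG. apply Rmult_lt_0_compat. apply exp_pos.
    apply Rmult_lt_0_compat; [|lra]. apply Rmult_lt_0_compat; auto. apply Rmult_lt_0_compat; auto. }
  assert (Hzy : z y > 1).
  { unfold z. assert (V1 y / V2 y - 1 = (V1 y - V2 y) / V2 y) by (field; auto).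
    assert (0 < (V1 y - V2 y) / V2 y) by (apply Rdiv_lt_0_compat; auto; lra). lra. }
  assert (Hzpos : forall x, 0 < z x) by (intro x; unfold z; apply Rdiv_lt_0_compat; auto).
  destruct (Rle_or_lt 0 (G y)) as [HGy|HGy].
  -
    assert (Hpr := prop_right z dz G dG a Hz HG Ha Hdz HdG y Hzy (Rle_ge _ _ HGy)).
    assert (Hz1 : forall x, y <= x -> z x > 1) by (intros x Hx; specialize (Hpr x Hx); lra).
    assert (Hg : G y < G (y + 1)).
    { apply (mono_lt G dG); auto. lra. intros t Ht. apply HdG, Hz1. lra. }
    assert (HGge : forall x, y + 1 <= x -> G (y + 1) <= G x).
    { intros x Hx. apply (mono_le G dG); auto. intros t Ht. left. apply HdG, Hz1. lra. }
    set (g := G (y + 1)). assert (Hg0 : 0 < g) by (unfold g; lra).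
    set (T1 := Rmax (Rmax T (y + 1)) 0).
    assert (HT1 : T <= T1 /\ y + 1 <= T1 /\ 0 <= T1).
    { unfold T1. split; [|split]. eapply Rle_trans; [apply Rmax_l|apply Rmax_l].
      eapply Rle_trans; [apply Rmax_r|apply Rmax_l]. apply Rmax_r. }
    assert (Hbz : forall x, T <= x -> z x <= 2 * R0 / K).
    { intros x Hx. unfold z. specialize (HV2K x Hx). specialize (HV1R x). specialize (HV1p x).
      replace (2 * R0 / K) with (R0 / (K / 2)) by (field; lra).
      unfold Rdiv. apply Rmult_le_compat; try lra. left; apply Rinv_0_lt_compat; auto.
      apply Rinv_le_contravar; lra. }
    assert (Halb : forall x, exp (- c * x) / R0 ^ 2 <= a x).
    { intro x. unfold a, Rdiv. apply Rmult_le_compat. left; apply exp_pos.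
      left; apply Rinv_0_lt_compat; apply pow_lt; auto.
      apply exp_le. specialize (HPb x). lra.
      apply Rinv_le_contravar. apply pow_lt; auto. specialize (HV2R x). specialize (HV2p x).
      apply pow_incr; lra. }
    assert (Hdzlb : forall x, 0 <= G x -> G x * (exp (- c * x) / R0 ^ 2) <= dz x).
    { intros x Hx. rewrite Hdz. apply Rmult_le_compat_l; auto. }
    assert (Hm : exists m T2, 0 < m /\ T1 <= T2 /\ forall x, T2 <= x -> m <= dz x).
    { destruct (Rle_or_lt c 0) as [Hc|Hc].
      - exists (g / R0 ^ 2), T1. split. apply Rdiv_lt_0_compat; auto. apply pow_lt; auto.
        split. lra. intros x Hx.
        assert (HGx : g <= G x) by (apply HGge; lra).
        eapply Rle_trans; [|apply Hdzlb; lra].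
        unfold Rdiv. apply Rmult_le_compat; try lra.
        left; apply Rinv_0_lt_compat; apply pow_lt; auto.
        rewrite <- (Rmult_1_l (/ R0 ^ 2)) at 1. apply Rmult_le_compat_r.
        left; apply Rinv_0_lt_compat; apply pow_lt; auto.
        rewrite <- exp_0. apply exp_le. nra.
      - set (zy := z y).
        set (delta := beta * exp (- Bd) * (K / 2) ^ 3 * (zy * (zy - 1))).
        assert (Hdel : 0 < delta).
        { unfold delta. apply Rmult_lt_0_compat. apply Rmult_lt_0_compat. apply Rmult_lt_0_compat; auto.
          apply exp_pos. apply pow_lt; lra. unfold zy; nra. }
        assert (HdGlb : forall x, T1 <= x -> delta * exp (c * x) <= dG x).
        { intros x Hx.
          assert (A1 : exp (c * x) * exp (- Bd) <= exp (Pf x)).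
          { rewrite <- exp_plus. apply exp_le. specialize (HPb x). lra. }
          assert (HV2x : K / 2 <= V2 x) by (apply HV2K; lra).
          assert (A2 : (K / 2) ^ 3 <= V2 x ^ 3) by (apply pow_incr; lra).
          assert (Hzx : zy <= z x) by (apply Hpr; lra).
          assert (A3 : zy * (zy - 1) <= z x * (z x - 1)) by (unfold zy in *; nra).
          assert (A4 : dG x = exp (Pf x) * (beta * (V2 x ^ 3 * (z x * (z x - 1))))).
          { unfold dG, z. field. auto. }
          rewrite A4.
          replace (delta * exp (c * x)) with ((exp (c * x) * exp (- Bd)) * (beta * ((K / 2) ^ 3 * (zy * (zy - 1))))) by (unfold delta; ring).
          assert (0 <= zy * (zy - 1)) by (unfold zy; nra).
          assert (0 <= (K / 2) ^ 3) by (apply pow_le; lra).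
          apply Rmult_le_compat; try lra.
          apply Rmult_le_pos; left; apply exp_pos.
          apply Rmult_le_pos; try lra. apply Rmult_le_pos; lra.
          apply Rmult_le_compat_l; try lra.
          apply Rmult_le_compat; lra. }
        set (Hf := fun t => G t - delta / c * exp (c * t)).
        assert (HHf : forall t, is_derive Hf t (dG t - delta / c * (c * exp (c * t)))).
        { intro t. apply der_minus. apply HG. apply is_derive_scal. apply der_expk. }
        assert (HHm : forall x, T1 <= x -> Hf T1 <= Hf x).
        { intros x Hx. apply (mono_le Hf _ T1 x HHf Hx). intros t Ht.
          specialize (HdGlb t (Rlt_le _ _ (proj1 Ht))).
          replace (delta / c * (c * exp (c * t))) with (delta * exp (c * t)) by (field; lra). lra. }
        assert (HGT1 : g <= G T1) by (apply HGge; lra).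
        set (T2 := T1 + ln 2 / c).
        assert (Hln2 : 0 < ln 2) by (rewrite <- ln_1; apply ln_increasing; lra).
        exists (delta / (2 * c) / R0 ^ 2), T2. split.
        apply Rdiv_lt_0_compat. apply Rdiv_lt_0_compat; lra. apply pow_lt; auto.
        split. unfold T2. assert (0 < ln 2 / c) by (apply Rdiv_lt_0_compat; lra). lra.
        intros x Hx.
        assert (HxT1 : T1 <= x). { unfold T2 in Hx. assert (0 < ln 2 / c) by (apply Rdiv_lt_0_compat; lra). lra. }
        specialize (HHm x HxT1). unfold Hf in HHm.
        assert (Hexp : 2 * exp (c * T1) <= exp (c * x)).
        { replace (2 * exp (c * T1)) with (exp (c * T1 + ln 2)) by (rewrite exp_plus, exp_ln; lra).
          apply exp_le. unfold T2 in Hx. 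
          replace (c * T1 + ln 2) with (c * (T1 + ln 2 / c)) by (field; lra). apply Rmult_le_compat_l; lra. }
        assert (HGx : delta / c * exp (c * x) / 2 <= G x).
        { assert (0 < exp (c * T1)) by apply exp_pos.
          assert (0 < delta / c) by (apply Rdiv_lt_0_compat; lra).
          assert (delta / c * exp (c * T1) <= delta / c * exp (c * x) / 2).
          { replace (delta / c * exp (c * x) / 2) with (delta / c * (exp (c * x) / 2)) by (field; lra).
            apply Rmult_le_compat_l; lra. }
          lra. }
        assert (0 <= G x). { assert (0 < delta / c * exp (c * x) / 2). apply Rdiv_lt_0_compat; [|lra]. apply Rmult_lt_0_compat. apply Rdiv_lt_0_compat; lra. apply exp_pos. lra. }
        eapply Rle_trans; [|apply Hdzlb; auto].
        replace (delta / (2 * c) / R0 ^ 2) with ((delta / c * exp (c * x) / 2) * (exp (- c * x) / R0 ^ 2)).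
        apply Rmult_le_compat_r; [left; apply Rdiv_lt_0_compat; [apply exp_pos|apply pow_lt; auto]|exact HGx].
        replace (- c * x) with (- (c * x)) by ring. rewrite exp_Ropp.
        assert (0 < exp (c * x)) by apply exp_pos. field. lra. }
    destruct Hm as [m [T2 [Hm [HT2 Hdm]]]].
    set (X := T2 + 2 * R0 / K / m + 1).
    assert (HX : T2 <= X). { unfold X. assert (0 < 2 * R0 / K / m). apply Rdiv_lt_0_compat; auto. apply Rdiv_lt_0_compat; lra. lra. }
    assert (HZ : z T2 - m * T2 <= z X - m * X).
    { apply (mono_le (fun t => z t - m * t) (fun t => dz t - m * 1)); auto.
      intro t. apply der_minus. apply Hz. apply is_derive_scal. apply der_id.
      intros t Ht. specialize (Hdm t (Rlt_le _ _ (proj1 Ht))). lra. }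
    assert (HzX : z X <= 2 * R0 / K) by (apply Hbz; lra).
    specialize (Hzpos T2).
    assert (m * (X - T2) = 2 * R0 / K + m) by (unfold X; field; split; lra).
    nra.
  - 
    assert (Hpl := prop_left z dz G dG a Hz HG Ha Hdz HdG y Hzy (Rlt_le _ _ HGy)).
    assert (Hz1 : forall x, x <= y -> z x > 1) by (intros x Hx; specialize (Hpl x Hx); lra).
    assert (Hg : G (y - 1) < G y).
    { apply (mono_lt G dG); auto. lra. intros t Ht. apply HdG, Hz1. lra. }
    assert (HGle : forall x, x <= y - 1 -> G x <= G (y - 1)).
    { intros x Hx. apply (mono_le G dG); auto. intros t Ht. left. apply HdG, Hz1. lra. }
    set (g := - G (y - 1)). assert (Hg0 : 0 < g) by (unfold g; lra).
    set (w := fun x => V2 x / V1 x).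
    set (dw := fun x => (d2 x * V1 x - V2 x * d1 x) / V1 x ^ 2).
    assert (Hw : forall x, is_derive w x (dw x)) by (intro x; apply is_derive_div; auto).
    set (lam := c + 2 * th).
    set (k := g * exp (2 * th * x1) / R0 ^ 2).
    assert (Hk : 0 < k). { unfold k. apply Rdiv_lt_0_compat. apply Rmult_lt_0_compat; auto. apply exp_pos. apply pow_lt; auto. }
    assert (Hdw : forall x, x <= y - 1 -> k * exp (- lam * x) <= dw x).
    { intros x Hx.
      set (e := exp (th * (x - x1))).
      assert (He : 0 < e) by apply exp_pos.
      assert (Hdwx : dw x = (- G x) * exp (- Pf x) * / V1 x ^ 2).
      { unfold dw, G. rewrite exp_Ropp. field. split; auto. apply Rgt_not_eq, exp_pos. }
      assert (Hkx : k * exp (- lam * x) = g * exp (- c * x) * / (R0 * e) ^ 2).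
      { unfold k, e, lam. 
        assert (exp (2 * th * x1) * exp (- (c + 2 * th) * x) * (exp (th * (x - x1)) * exp (th * (x - x1))) = exp (- c * x)).
        { rewrite <- !exp_plus. f_equal. ring. }
        assert (0 < exp (th * (x - x1))) by apply exp_pos.
        rewrite <- H. field. split; lra. }
      rewrite Hdwx, Hkx.
      assert (B0 : g <= - G x) by (specialize (HGle x Hx); unfold g; lra).
      assert (B1 : exp (- c * x) <= exp (- Pf x)) by (apply exp_le; specialize (HPb x); lra).
      assert (B2 : / (R0 * e) ^ 2 <= / V1 x ^ 2).
      { apply Rinv_le_contravar. apply pow_lt; auto. apply pow_incr. split. left; auto. apply HV1e. }
      apply Rmult_le_compat; try lra.
      apply Rmult_le_pos; [lra|left; apply exp_pos].
      left; apply Rinv_0_lt_compat; apply pow_lt; apply Rmult_lt_0_compat; auto.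
      apply Rmult_le_compat; try lra. left; apply exp_pos. }
    assert (Hlam0 : 0 < lam) by (unfold lam; lra).
    set (Ef := fun t => w t + k / lam * exp (- lam * t)).
    assert (HEf : forall t, is_derive Ef t (dw t + k / lam * (- lam * exp (- lam * t)))).
    { intro t. apply der_plus. apply Hw. apply is_derive_scal. apply der_expk. }
    assert (HEm : forall x, x <= y - 1 -> Ef x <= Ef (y - 1)).
    { intros x Hx. apply (mono_le Ef _ x (y - 1) HEf Hx). intros t Ht.
      specialize (Hdw t (Rlt_le _ _ (proj2 Ht))).
      replace (k / lam * (- lam * exp (- lam * t))) with (- (k * exp (- lam * t))) by (field; lra). lra. }
    set (Ey := Ef (y - 1)).
    assert (HEy : 0 < Ey).
    { unfold Ey, Ef. assert (0 < w (y - 1)) by (unfold w; apply Rdiv_lt_0_compat; auto).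
      assert (0 < k / lam * exp (- lam * (y - 1))). apply Rmult_lt_0_compat. apply Rdiv_lt_0_compat; auto. apply exp_pos. lra. }
    set (X := Rmin (y - 1) (- ln (lam * Ey / k) / lam)).
    assert (HX1 : X <= y - 1) by apply Rmin_l.
    assert (HX2 : X <= - ln (lam * Ey / k) / lam) by apply Rmin_r.
    assert (Hexp : lam * Ey / k <= exp (- lam * X)).
    { rewrite <- (exp_ln (lam * Ey / k)) at 1.
      apply exp_le. apply (Rmult_le_compat_l lam) in HX2; [|lra].
      replace (lam * (- ln (lam * Ey / k) / lam)) with (- ln (lam * Ey / k)) in HX2 by (field; lra). lra.
      apply Rdiv_lt_0_compat; auto. apply Rmult_lt_0_compat; auto. }
    specialize (HEm X HX1). fold Ey in HEm. unfold Ef in HEm.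
    assert (0 < w X) by (unfold w; apply Rdiv_lt_0_compat; auto).
    assert (Ey <= k / lam * exp (- lam * X)).
    { replace Ey with (k / lam * (lam * Ey / k)) by (field; lra).
      apply Rmult_le_compat_l; auto. left; apply Rdiv_lt_0_compat; auto. }
    lra.
Qed.

Lemma between_abs a b c : Rmin a b <= c <= Rmax a b -> Rabs (c - a) <= Rabs (b - a).
Proof.
  unfold Rmin, Rmax. destruct (Rle_dec a b); intros [H1 H2];
  unfold Rabs; repeat destruct Rcase_abs; lra.
Qed.

Lemma pos_core (c beta T K Bd MQ : R) (p q0 Pf w : R -> R) :
  0 < K -> 0 <= Bd -> 0 <= MQ ->
  (forall x, is_derive Pf x (p x)) -> (forall x, c * x - Bd <= Pf x <= c * x) ->
  (forall x, ex_derive w x) -> (forall x, ex_derive (Derive w) x) ->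
  (forall x, Derive (Derive w) x + p x * Derive w x + (q0 x - beta * w x) * w x = 0) ->
  (forall x, Rabs (q0 x - beta * w x) <= MQ) ->
  (forall x, 0 <= w x) -> (forall x, T <= x -> K / 2 <= w x) -> forall x, 0 < w x.
Proof.
  intros HK HBd HMQ HP HPb Hwd Hwdd Heq HQ Hw0 HwK.
  set (d := Derive w). set (dd := Derive d).
  assert (Hd : forall x, is_derive w x (d x)) by (intro; apply Derive_correct; auto).
  assert (Hd' : forall x, is_derive d x (dd x)) by (intro; apply Derive_correct; auto).
  assert (E : forall x, dd x = - (p x * d x) - (q0 x - beta * w x) * w x) by (intro x; specialize (Heq x); fold d dd in Heq; lra).
  set (H := fun x => exp (Pf x) * d x).
  set (dH := fun x => - (exp (Pf x) * (q0 x - beta * w x) * w x)).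
  assert (HH : forall x, is_derive H x (dH x)).
  { intro x. assert (K1 := der_mult _ _ x _ _ (der_expf Pf p x (HP x)) (Hd' x)).
    match type of K1 with is_derive _ _ ?l => replace (dH x) with l end. exact K1.
    unfold dH. rewrite E. ring. }
  set (C0 := exp (2 * Rabs c + Bd) * MQ).
  assert (HC0 : 0 <= C0) by (unfold C0; apply Rmult_le_pos; auto; left; apply exp_pos).
  set (h := Rmin 1 (/ (2 * (C0 + 1)))).
  assert (Hh0 : 0 < h). { unfold h. apply Rmin_glb_lt. lra. apply Rinv_0_lt_compat. lra. }
  assert (Hh1 : h <= 1) by apply Rmin_l.
  assert (HhC : h * h * C0 <= / 2).
  { assert (h <= / (2 * (C0 + 1))) by apply Rmin_r.
    assert (h * C0 <= / (2 * (C0 + 1)) * C0) by (apply Rmult_le_compat_r; auto).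
    assert (/ (2 * (C0 + 1)) * C0 < / 2).
    { apply (Rmult_lt_reg_l (2 * (C0 + 1))). lra. field_simplify; lra. }
    assert (h * h * C0 <= h * C0). { replace (h * h * C0) with (h * (h * C0)) by ring. 
      rewrite <- (Rmult_1_l (h * C0)) at 2. apply Rmult_le_compat_r; nra. }
    lra. }
  assert (Hloc : forall x0, w x0 = 0 -> w (x0 + h) = 0).
  { intros x0 Hx0.
    assert (Hdx0 : d x0 = 0). { apply (der_min w x0 (d x0) (Hd x0)). intro y. rewrite Hx0. apply Hw0. }
    assert (HHx0 : H x0 = 0) by (unfold H; rewrite Hdx0; ring).
    destruct (continuity_ab_maj w (x0 - h) (x0 + h)) as [m [Hm1 Hm2]]. lra.
    intros; apply (cont_of_der w d); auto.
    assert (Hmx0 : Rabs (m - x0) <= h) by (apply Rabs_le; lra).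
    destruct (mvt_any w d x0 m Hd) as [xi [Hxi Exi]].
    destruct (mvt_any H dH x0 xi HH) as [eta [Heta Eeta]].
    assert (Hxi1 := between_abs _ _ _ Hxi). assert (Heta1 := between_abs _ _ _ Heta).
    assert (Hdxi : d xi = H xi * exp (- Pf xi)).
    { unfold H. rewrite exp_Ropp. field. apply Rgt_not_eq, exp_pos. }
    assert (Hwm : w m = dH eta * (xi - x0) * exp (- Pf xi) * (m - x0)).
    { rewrite Hx0 in Exi. rewrite HHx0 in Eeta. assert (EH : H xi = dH eta * (xi - x0)) by lra. rewrite Hdxi, EH in Exi. lra. }
    assert (HdH : Rabs (dH eta) <= exp (Pf eta) * MQ * w m).
    { unfold dH. rewrite Rabs_Ropp, !Rabs_mult, (Rabs_right (exp _)) by (left; apply exp_pos).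
      rewrite (Rabs_right (w eta)) by (apply Rle_ge, Hw0).
      apply Rmult_le_compat. apply Rmult_le_pos. left; apply exp_pos. apply Rabs_pos. apply Hw0.
      apply Rmult_le_compat_l. left; apply exp_pos. apply HQ.
      apply Hm1. assert (Rabs (eta - x0) <= h) by lra. apply Rabs_le_between in H0. lra. }
    assert (Hexpb : exp (Pf eta) * exp (- Pf xi) <= exp (2 * Rabs c + Bd)).
    { rewrite <- exp_plus. apply exp_le.
      assert (Rabs (eta - xi) <= 2 * h).
      { replace (eta - xi) with ((eta - x0) - (xi - x0)) by ring.
        eapply Rle_trans. apply Rabs_triang. rewrite Rabs_Ropp. lra. }
      assert (c * (eta - xi) <= Rabs c * Rabs (eta - xi)).
      { rewrite <- Rabs_mult. apply Rle_abs. }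
      assert (Rabs c * Rabs (eta - xi) <= Rabs c * 2) by (apply Rmult_le_compat_l; [apply Rabs_pos|lra]).
      assert (Hq1 := HPb eta). assert (Hq2 := HPb xi). lra. }
    assert (Hwmb : w m <= h * h * C0 * w m).
    { assert (w m <= Rabs (w m)) by apply Rle_abs.
      rewrite Hwm in H0 at 2. rewrite !Rabs_mult in H0.
      rewrite (Rabs_right (exp _)) in H0 by (left; apply exp_pos).
      eapply Rle_trans. apply H0.
      assert (0 <= w m) by apply Hw0.
      replace (Rabs (dH eta) * Rabs (xi - x0) * exp (- Pf xi) * Rabs (m - x0)) with
        ((Rabs (dH eta) * exp (- Pf xi)) * (Rabs (xi - x0) * Rabs (m - x0))) by ring.
      replace (h * h * C0 * w m) with ((exp (2 * Rabs c + Bd) * MQ * w m) * (h * h)) by (unfold C0; ring).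
      apply Rmult_le_compat. apply Rmult_le_pos. apply Rabs_pos. left; apply exp_pos.
      apply Rmult_le_pos; apply Rabs_pos.
      - eapply Rle_trans. apply Rmult_le_compat_r. left; apply exp_pos. exact HdH.
        replace (exp (Pf eta) * MQ * w m * exp (- Pf xi)) with ((exp (Pf eta) * exp (- Pf xi)) * (MQ * w m)) by ring.
        replace (exp (2 * Rabs c + Bd) * MQ * w m) with (exp (2 * Rabs c + Bd) * (MQ * w m)) by ring.
        apply Rmult_le_compat_r. apply Rmult_le_pos; auto. exact Hexpb.
      - apply Rmult_le_compat; try apply Rabs_pos; lra. }
    assert (w m <= 0). { assert (0 <= w m) by apply Hw0. nra. }
    assert (w (x0 + h) <= w m) by (apply Hm1; lra).
    specialize (Hw0 (x0 + h)). lra. }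
  intro x. destruct (Rlt_or_le 0 (w x)) as [Hp|Hn]; auto. exfalso.
  assert (Hx0 : w x = 0) by (specialize (Hw0 x); lra).
  assert (Hind : forall n, w (x + INR n * h) = 0).
  { induction n. simpl. rewrite Rmult_0_l, Rplus_0_r. auto.
    rewrite S_INR. replace (x + (INR n + 1) * h) with ((x + INR n * h) + h) by ring. apply Hloc; auto. }
  destruct (INR_archimed h (T - x) Hh0) as [n Hn'].
  specialize (Hind n). assert (K / 2 <= w (x + INR n * h)) by (apply HwK; lra). lra.
Qed.

Lemma cb_cont (u : R -> R) : Cb_unif u -> forall y, continuous u y.
Proof.
  intros [_ Hu] y. apply filterlim_locally. intro eps.
  destruct (Hu eps (cond_pos eps)) as [d [Hd Hd']].
  exists (mkposreal d Hd). intros z Hz. unfold ball in *; simpl in *.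
  unfold AbsRing_ball, abs, minus, plus, opp in *; simpl in *.
  apply Hd'. exact Hz.
Qed.

Theorem lemma3p5
  (chi b nu mu c : R) (r : R -> R) (rminus rstar : R)
  (r1 x1 theta1 eps : R) (phi : R -> R) (ct a x0 : R)
  (* parameters *)
  (Hchi : 0 < chi) (Hb : 0 < b) (Hnu : 0 < nu) (Hmu : 0 < mu)
  (Hb2 : b > 2 * chi * mu)
  (* r *)
  (Hr_hold : Holder_cont r)
  (Hr_bdd : exists M, forall x, Rabs (r x) <= M)
  (Hr_minus : is_lim r m_infty rminus)
  (Hr_plus : is_lim r p_infty rstar)
  (Hr_sign : rminus < 0 < rstar)
  (Hr_range : forall x, rminus <= r x <= rstar)
  (* speed condition *)
  (Hc : c > chi * mu * rstar / (2 * sqrt nu * (b - chi * mu))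
            - 2 * sqrt (rstar * (b - 2 * chi * mu) / (b - chi * mu)))
  (* r1, x1, theta1 *)
  (Hr1 : rminus < r1 < 0)
  (Hx1 : forall x, x <= x1 -> r x <= r1)
  (Htheta1 : 0 < theta1 /\ theta1 ^ 2 + c * theta1 + r1 = 0)
  (* eps and the decreasing traveling wave (phi, ct) of phi''+ct phi'+f_eps(phi)=0 *)
  (Heps : 0 < eps < rstar * (b - 2 * chi * mu) / (b - chi * mu))
  (Hphi_d1 : forall z, ex_derive phi z)
  (Hphi_d2 : forall z, ex_derive (Derive phi) z)
  (Hphi_eq : forall z, Derive (Derive phi) z + ct * Derive phi z
                       + f_eps rstar eps chi mu b (phi z) = 0)
  (Hphi_dec : forall z w, z < w -> phi w <= phi z)
  (Hphi_minus : is_lim phi m_infty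
     (((rstar - eps) * (b - chi * mu) - chi * mu * rstar) / (b - chi * mu) ^ 2))
  (Hphi_plus : is_lim phi p_infty (- eps))
  (Hct : ct > 2 * sqrt (rstar * (b - 2 * chi * mu) / (b - chi * mu))
              - (c - chi * mu * rstar / (2 * sqrt nu * (b - chi * mu))
                 + 2 * sqrt (rstar * (b - 2 * chi * mu) / (b - chi * mu))) / 2)
  (* psi_eps(x) = phi(a - x), translated so that psi_eps(x0) = 0 *)
  (Hx0 : x0 > x1)
  (Hpsi0 : phi (a - x0) = 0)
  (Hx0r : forall x, x > x0 -> r x >= rstar - eps)
  : let U1p := U1plus rstar chi mu b theta1 x1 in
    let U1m := fun x => Rmax (phi (a - x)) 0 in
    forall (u : R -> R), in_E1 U1m U1p u ->
    forall (U : R -> R -> R) (Ustar : R -> R),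
      parabolic_sol c chi nu mu b r u U1p U ->
      (forall x, is_lim (fun t => U t x) p_infty (Ustar x)) ->
      in_E1 U1m U1p Ustar ->
      elliptic_sol c chi nu mu b r u Ustar ->
      (forall x, 0 < Ustar x) /\
      (forall V : R -> R, in_E1 U1m U1p V -> elliptic_sol c chi nu mu b r u V ->
         (forall x, 0 < V x) -> forall x, V x = Ustar x).
Proof.
  intros U1p U1m u [Hucb Hub] U Ustar _ _ [_ HUsb] [HUs1 [HUs2 HUs3]].
  assert (Hbeta : 0 < b - chi * mu) by nra.
  set (R0 := rstar / (b - chi * mu)).
  assert (HR0 : 0 < R0) by (unfold R0; apply Rdiv_lt_0_compat; lra).
  assert (HU1p1 : forall x, U1p x <= R0) by (intro; apply Rmin_l).
  assert (HU1p2 : forall x, U1p x <= R0 * exp (theta1 * (x - x1))) by (intro; apply Rmin_r).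
  assert (HU1m0 : forall x, 0 <= U1m x) by (intro; apply Rmax_r).
  assert (HU1m1 : forall x, phi (a - x) <= U1m x) by (intro; apply Rmax_l).
  set (K := ((rstar - eps) * (b - chi * mu) - chi * mu * rstar) / (b - chi * mu) ^ 2).
  assert (HK : 0 < K).
  { unfold K. apply Rdiv_lt_0_compat; [|apply pow_lt; auto].
    destruct Heps as [He1 He2].
    assert (eps * (b - chi * mu) < rstar * (b - 2 * chi * mu)).
    { replace (rstar * (b - 2 * chi * mu)) with (rstar * (b - 2 * chi * mu) / (b - chi * mu) * (b - chi * mu)) by (field; lra).
      apply Rmult_lt_compat_r; auto. }
    nra. }
  assert (HT : exists T, forall x, T <= x -> K / 2 < phi (a - x)).
  { assert (H := Hphi_minus (fun v => K / 2 < v)). fold K in H.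
    destruct H as [M HM].
    { exists (mkposreal (K / 2) ltac:(lra)). intros v Hv. unfold ball in Hv; simpl in Hv.
      unfold AbsRing_ball, abs, minus, plus, opp in Hv; simpl in Hv. apply Rabs_def2 in Hv. lra. }
    exists (a - M + 1). intros x Hx. apply HM. lra. }
  destruct HT as [T HT].
  assert (HuC := cb_cont u Hucb).
  assert (Hu0 : forall y, 0 <= u y <= R0).
  { intro y. destruct (Hub y). split. eapply Rle_trans; [apply HU1m0|eauto]. eapply Rle_trans; eauto. }
  destruct (psi_props nu mu u R0 Hnu Hmu HuC Hu0) as [HPsid HPsib].
  set (Bd0 := mu / (2 * sqrt nu) * (2 * R0 / sqrt nu)) in HPsib.
  assert (HBd0 : 0 <= Bd0).
  { destruct (HPsib 0). lra. }
  set (Pf := fun x => c * x - chi * Psi nu mu u x).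
  set (p := fun x => c - chi * Psi_x nu mu u x).
  set (q0 := fun x => r x - chi * nu * Psi nu mu u x).
  assert (HP : forall x, is_derive Pf x (p x)).
  { intro x. unfold Pf, p. apply der_minus.
    assert (Hc1 : is_derive (fun t : R => c * t) x c) by (auto_derive; auto; ring). exact Hc1.
    apply is_derive_scal. unfold Psi_x. apply Derive_correct. apply HPsid. }
  assert (HPb : forall x, c * x - chi * Bd0 <= Pf x <= c * x).
  { intro x. unfold Pf. destruct (HPsib x). split; nra. }
  assert (HchiBd : 0 <= chi * Bd0) by nra.
  assert (Hlam : 0 < c + 2 * theta1) by (destruct Htheta1; nra).
  assert (HEq : forall V, elliptic_sol c chi nu mu b r u V -> forall x,
     Derive (Derive V) x + p x * Derive V x + (q0 x - (b - chi * mu) * V x) * V x = 0).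
  { intros V [_ [_ HV]] x. exact (HV x). }
  assert (HUsp : forall x, 0 < Ustar x).
  { destruct Hr_bdd as [Mr HMr].
    assert (HMQ : 0 <= Mr + chi * nu * Bd0 + (b - chi * mu) * R0).
    { assert (0 <= Mr) by (eapply Rle_trans; [apply Rabs_pos|apply (HMr 0)]).
      assert (0 <= chi * nu * Bd0) by (apply Rmult_le_pos; nra).
      assert (0 <= (b - chi * mu) * R0) by nra. lra. }
    assert (HEqU := HEq Ustar (conj HUs1 (conj HUs2 HUs3))).
    assert (HQ : forall x, Rabs (q0 x - (b - chi * mu) * Ustar x) <= Mr + chi * nu * Bd0 + (b - chi * mu) * R0).
    { intro x. unfold q0. destruct (HPsib x). destruct (HUsb x).
      assert (HUx : 0 <= Ustar x <= R0). { split. eapply Rle_trans; [apply HU1m0|eauto]. eapply Rle_trans; eauto. }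
      replace (r x - chi * nu * Psi nu mu u x - (b - chi * mu) * Ustar x) with (r x + - (chi * nu * Psi nu mu u x + (b - chi * mu) * Ustar x)) by ring.
      eapply Rle_trans. apply Rabs_triang. rewrite Rabs_Ropp.
      rewrite (Rabs_right (chi * nu * Psi nu mu u x + (b - chi * mu) * Ustar x)).
      assert (chi * nu * Psi nu mu u x <= chi * nu * Bd0) by (apply Rmult_le_compat_l; nra).
      assert ((b - chi * mu) * Ustar x <= (b - chi * mu) * R0) by (apply Rmult_le_compat_l; lra).
      specialize (HMr x). lra.
      apply Rle_ge. assert (0 <= chi * nu * Psi nu mu u x) by (apply Rmult_le_pos; nra). nra. }
    assert (Hw0 : forall x, 0 <= Ustar x).
    { intro x. destruct (HUsb x). eapply Rle_trans; [apply HU1m0|eauto]. }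
    assert (HwK : forall x, T <= x -> K / 2 <= Ustar x).
    { intros x Hx. destruct (HUsb x). specialize (HT x Hx). specialize (HU1m1 x). lra. }
    exact (pos_core c (b - chi * mu) T K (chi * Bd0) (Mr + chi * nu * Bd0 + (b - chi * mu) * R0) p q0 Pf Ustar
      HK HchiBd HMQ HP HPb HUs1 HUs2 HEqU HQ Hw0 HwK). }
  split; auto.
  intros V [_ HVb] HVsol HVp x.
  assert (HVsol' := HVsol). destruct HVsol' as [HV1 [HV2 _]].
  assert (Hle : forall (V1 V2 : R -> R), (forall x, U1m x <= V1 x <= U1p x) -> (forall x, U1m x <= V2 x <= U1p x) ->
     elliptic_sol c chi nu mu b r u V1 -> elliptic_sol c chi nu mu b r u V2 ->
     (forall x, 0 < V1 x) -> (forall x, 0 < V2 x) -> forall x, V1 x <= V2 x).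
  { intros V1 V2 HB1 HB2 HS1 HS2 HP1 HP2.
    destruct HS1 as [HS1a [HS1b HS1c]]. destruct HS2 as [HS2a [HS2b HS2c]].
    assert (E1 : forall y, Derive (Derive V1) y + p y * Derive V1 y + (q0 y - (b - chi * mu) * V1 y) * V1 y = 0) by (intro y; exact (HS1c y)).
    assert (E2 : forall y, Derive (Derive V2) y + p y * Derive V2 y + (q0 y - (b - chi * mu) * V2 y) * V2 y = 0) by (intro y; exact (HS2c y)).
    assert (B1 : forall y, V1 y <= R0) by (intro y; destruct (HB1 y); eapply Rle_trans; eauto).
    assert (B2 : forall y, V2 y <= R0) by (intro y; destruct (HB2 y); eapply Rle_trans; eauto).
    assert (B3 : forall y, V1 y <= R0 * exp (theta1 * (y - x1))) by (intro y; destruct (HB1 y); eapply Rle_trans; eauto).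
    assert (B4 : forall y, T <= y -> K / 2 <= V2 y).
    { intros y Hy. destruct (HB2 y). specialize (HT y Hy). specialize (HU1m1 y). lra. }
    exact (core c (b - chi * mu) R0 theta1 x1 T K (chi * Bd0) p q0 Pf V1 V2 Hbeta HK HR0 Hlam HchiBd HP HPb
      HS1a HS1b HS2a HS2b E1 E2 HP1 HP2 B1 B2 B3 B4). }
  apply Rle_antisym.
  - apply (Hle V Ustar); auto. repeat split; auto.
  - apply (Hle Ustar V); auto. repeat split; auto.
Qed.
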